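(* Let $J$ be a $\times d$-invariant set, $\delta$ its Hausdorff dimension, $\mu=\mathcal{H}^\delta|_J$, and $\lambda$ Lebesgue measure on $\mathbb{R}$. For $x\ne y$ in $\mathbb{R}$ let $f_{x,y}$ be the unique affine map $\mathbb{R}\to\mathbb{R}$ with $f_{x,y}(x)=0$ and $f_{x,y}(y)=1$. Then: (i) for $\lambda\times\lambda$-almost every $(x,y)\in\mathbb{R}^2$, $f_{x,y}(J)\cap\mathbb{Q}=\emptyset$; (ii) for $\mu\times\lambda$-almost every $(x,y)\in\mathbb{R}^2$, $f_{x,y}(J)\cap\mathbb{Q}=\{0\}$.
   Context: Fix an integer $d\ge2$ and $E\subseteq\{0,\dots,d-1\}$ with $1<\#E<d$. The associated $\times d$-invariant set is $J=\{x\in[0,1]: x=\sum_{i\ge1}a_id^{-i}\text{ for some digits }a_i\in E\}$. *)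

(* Defs.v *)
From Stdlib Require Export Reals Lra QArith Qreals List.
Open Scope R_scope.

Definition digitJ (d : nat) (E : list nat) (x : R) : Prop :=
  exists a : nat -> nat,
    (forall i, In (a i) E) /\
    infinite_sum (fun i => INR (a i) / INR d ^ (S i)) x.

(* "the (outer) measure of A is <= r" predicates. *)
Definition set_meas_le := (R -> Prop) -> R -> Prop.

Definition leb_le : set_meas_le := fun A r =>
  forall eps, 0 < eps ->
    exists c e : nat -> R,
      (forall n, c n <= e n) /\
      (forall x, A x -> exists n, c n <= x <= e n) /\
      (forall k, sum_f_R0 (fun n => e n - c n) k <= r + eps).

Definition diam_le (U : R -> Prop) (rho : R) : Prop :=
  forall x y, U x -> U y -> Rabs (x - y) <= rho.

(* Covering sets are given with a positive
   upper bound on their diameter (equivalent for s > 0). *)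
Definition haus_le (s : R) : set_meas_le := fun A r =>
  forall eta, 0 < eta -> forall eps, 0 < eps ->
    exists (U : nat -> R -> Prop) (rho : nat -> R),
      (forall n, 0 < rho n <= eta /\ diam_le (U n) (rho n)) /\
      (forall x, A x -> exists n, U n x) /\
      (forall k, sum_f_R0 (fun n => Rpower (rho n) s) k <= r + eps).

Definition hausdorff_dim (J : R -> Prop) (delta : R) : Prop :=
  0 <= delta /\
  (forall s, delta < s -> haus_le s J 0) /\
  (forall s, 0 < s < delta -> forall r, ~ haus_le s J r).

Definition haus_restr (delta : R) (J : R -> Prop) : set_meas_le :=
  fun A r => haus_le delta (fun t => A t /\ J t) r.

Definition prod_null (m1 m2 : set_meas_le) (N : R -> R -> Prop) : Prop :=
  forall eps, 0 < eps ->
    exists (A B : nat -> R -> Prop) (a b : nat -> R),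
      (forall n, 0 <= a n /\ 0 <= b n /\ m1 (A n) (a n) /\ m2 (B n) (b n)) /\
      (forall x y, N x y -> exists n, A n x /\ B n y) /\
      (forall k, sum_f_R0 (fun n => a n * b n) k <= eps).

Definition faff (x y t : R) : R := (t - x) / (y - x).

(* Main.v *)
Require Import Defs.
From Stdlib Require Import Reals Lra Lia List ClassicalEpsilon.
Open Scope R_scope.

Definition lsum {A} (f : A -> R) (l : list A) : R :=
  fold_right (fun x acc => f x + acc) 0 l.

Lemma lsum_app {A} (f : A -> R) l1 l2 : lsum f (l1 ++ l2) = lsum f l1 + lsum f l2.
Proof. induction l1; simpl; [lra|rewrite IHl1; lra]. Qed.

Lemma lsum_nonneg {A} (f : A -> R) l : (forall x, In x l -> 0 <= f x) -> 0 <= lsum f l.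
Proof. induction l; simpl; intros H; [lra|]. 
  assert (0 <= f a) by auto. assert (0 <= lsum f l) by auto. lra. Qed.

Lemma lsum_le {A} (f g : A -> R) l : (forall x, In x l -> f x <= g x) -> lsum f l <= lsum g l.
Proof. induction l; simpl; intros H; [lra|].
  assert (f a <= g a) by auto. assert (lsum f l <= lsum g l) by auto. lra. Qed.

Lemma lsum_mem {A} (f : A -> R) l x : (forall y, In y l -> 0 <= f y) -> In x l -> f x <= lsum f l.
Proof. induction l; simpl; intros H Hx; [tauto|].
  destruct Hx as [->|Hx].
  - assert (0 <= lsum f l) by (apply lsum_nonneg; auto). lra.
  - assert (f x <= lsum f l) by auto. assert (0 <= f a) by auto. lra. Qed.

Lemma lsum_const {A} (c : R) (l : list A) : lsum (fun _ => c) l = INR (length l) * c.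
Proof. induction l; simpl lsum; simpl length; [simpl; lra|]. rewrite IHl, S_INR. lra. Qed.

Lemma lsum_plus {A} (f g : A -> R) l : lsum (fun x => f x + g x) l = lsum f l + lsum g l.
Proof. induction l; simpl; [lra|rewrite IHl; lra]. Qed.

Lemma lsum_scal {A} (c : R) (f : A -> R) l : lsum (fun x => c * f x) l = c * lsum f l.
Proof. induction l; simpl; [lra|rewrite IHl; lra]. Qed.

Lemma lsum_swap {A B} (g : A -> B -> R) (l1 : list A) (l2 : list B) :
  lsum (fun a => lsum (g a) l2) l1 = lsum (fun b => lsum (fun a => g a b) l1) l2.
Proof.
  induction l1; simpl.
  - induction l2; simpl; [lra|rewrite <- IHl2; lra].
  - rewrite IHl1. rewrite <- lsum_plus. reflexivity.
Qed.

Lemma lsum_map {A B} (f : B -> R) (h : A -> B) l : lsum f (map h l) = lsum (fun x => f (h x)) l.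
Proof. induction l; simpl; [lra|rewrite IHl; lra]. Qed.

Lemma lsum_ext {A} (f g : A -> R) l : (forall x, In x l -> f x = g x) -> lsum f l = lsum g l.
Proof. induction l; simpl; intros H; [lra|]. rewrite H by auto. rewrite IHl; auto. Qed.

Lemma sum_nth_le {A} (f : A -> R) (z : A) l k :
  f z = 0 -> (forall x, In x l -> 0 <= f x) ->
  sum_f_R0 (fun n => f (nth n l z)) k <= lsum f l.
Proof.
  intros Hz. revert k. induction l as [|a l IH]; intros k H.
  - simpl. induction k; simpl; rewrite ?Hz; [lra|]. destruct k; simpl in *; rewrite ?Hz in *; lra.
  - destruct k.
    + simpl. assert (0 <= lsum f l) by (apply lsum_nonneg; auto with datatypes). lra.
    + rewrite decomp_sum by lia. simpl lsum. simpl nth. simpl pred.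
      assert (sum_f_R0 (fun i => f (nth i l z)) k <= lsum f l) by (apply IH; auto with datatypes).
      lra.
Qed.

Lemma sum_f_R0_concat {A} (f : A -> R) (G : nat -> list A) N :
  lsum f (concat (map G (seq 0 (S N)))) = sum_f_R0 (fun n => lsum f (G n)) N.
Proof.
  induction N.
  - simpl. rewrite app_nil_r. reflexivity.
  - rewrite seq_S, map_app, concat_app, lsum_app, IHN. simpl. rewrite app_nil_r. reflexivity.
Qed.

Lemma sum_f_R0_le (f g : nat -> R) k : (forall n, f n <= g n) -> sum_f_R0 f k <= sum_f_R0 g k.
Proof. intros H; induction k; simpl; [apply H|]. specialize (H (S k)). lra. Qed.

Lemma sum_f_R0_plus (f g : nat -> R) k : sum_f_R0 (fun n => f n + g n) k = sum_f_R0 f k + sum_f_R0 g k.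
Proof. induction k; simpl; lra. Qed.

Lemma sum_geom_eps (e : R) k : 0 <= e -> sum_f_R0 (fun n => e * (/2)^(S n)) k <= e.
Proof.
  intros He. assert (H: sum_f_R0 (fun n => e * (/2)^(S n)) k = e * (1 - (/2)^(S k))).
  { induction k; simpl in *; [lra|]. rewrite IHk. simpl. field. }
  rewrite H. assert (0 < (/2)^(S k)) by (apply pow_lt; lra). nra.
Qed.

Lemma sum_if_lt (c : R) (len k : nat) : 0 <= c ->
  sum_f_R0 (fun n => if Nat.ltb n len then c else 0) k <= INR len * c.
Proof.
  intros Hc. assert (H: sum_f_R0 (fun n => if Nat.ltb n len then c else 0) k = INR (Nat.min (S k) len) * c).
  { induction k.
    - simpl. destruct len; simpl; [lra|]. destruct (Nat.ltb 0 (S len)) eqn:E; [lra|].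
      apply Nat.ltb_ge in E; lia.
    - simpl sum_f_R0. rewrite IHk. destruct (Nat.ltb (S k) len) eqn:E.
      + apply Nat.ltb_lt in E. rewrite !Nat.min_l by lia. rewrite (S_INR (S k)). lra.
      + apply Nat.ltb_ge in E. rewrite !Nat.min_r by lia. lra. }
  rewrite H. apply Rmult_le_compat_r; auto. apply le_INR; lia.
Qed.

Lemma Rabs_le_inv x r : Rabs x <= r -> - r <= x <= r.
Proof. unfold Rabs; destruct Rcase_abs; intros; lra. Qed.

Lemma Rabs_le_intro x r : - r <= x <= r -> Rabs x <= r.
Proof. unfold Rabs; destruct Rcase_abs; intros; lra. Qed.
From Stdlib Require Import Reals Lra Lia List ClassicalEpsilon.
Open Scope R_scope.

Definition Nv (d : nat) (w : list nat) : nat := fold_left (fun acc e => (acc * d + e)%nat) w 0%nat.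
Definition prefx (a : nat -> nat) (k : nat) : list nat := map a (seq 0 k).
Fixpoint decode (d k j : nat) : list nat :=
  match k with O => nil | S k' => decode d k' (j / d) ++ (j mod d :: nil) end.
Fixpoint extw (E : list nat) (v : list nat) (k : nat) : list (list nat) :=
  match k with O => v :: nil
  | S k' => flat_map (fun w => map (fun e => w ++ e :: nil) E) (extw E v k') end.

Definition dterm (d : nat) (a : nat -> nat) (i : nat) : R := INR (a i) / INR d ^ (S i).

Lemma Nv_snoc d w e : Nv d (w ++ e :: nil) = (Nv d w * d + e)%nat.
Proof. unfold Nv. rewrite fold_left_app. reflexivity. Qed.

Lemma prefx_S a k : prefx a (S k) = prefx a k ++ a k :: nil.
Proof. unfold prefx. rewrite seq_S, map_app. reflexivity. Qed.

Lemma prefx_length a k : length (prefx a k) = k.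
Proof. unfold prefx. rewrite length_map, length_seq. reflexivity. Qed.

Lemma decode_length d k j : length (decode d k j) = k.
Proof. revert j; induction k; intros; simpl; [reflexivity|]. rewrite length_app, IHk. simpl. lia. Qed.

Lemma decode_Nv d w : (1 <= d)%nat -> (forall e, In e w -> (e < d)%nat) -> decode d (length w) (Nv d w) = w.
Proof.
  intros Hd. induction w as [|e w IH] using rev_ind; intros H; [reflexivity|].
  rewrite length_app, Nat.add_comm. simpl. rewrite Nv_snoc.
  assert (He : (e < d)%nat) by (apply H; apply in_or_app; simpl; auto).
  replace ((Nv d w * d + e) / d)%nat with (Nv d w).
  2:{ rewrite Nat.div_add_l by lia. rewrite Nat.div_small by lia. lia. }
  replace ((Nv d w * d + e) mod d)%nat with e.
  2:{ rewrite Nat.Div0.add_mod by lia. rewrite Nat.Div0.mod_mul. simpl. rewrite Nat.Div0.mod_mod.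
      rewrite Nat.mod_small; lia. }
  rewrite IH; auto. intros; apply H; apply in_or_app; auto.
Qed.

Lemma Nv_lt d w : (forall e, In e w -> (e < d)%nat) -> (Nv d w < d ^ length w)%nat.
Proof.
  induction w as [|e w IH] using rev_ind; intros H; [unfold Nv; simpl; lia|].
  rewrite Nv_snoc, length_app. simpl length.
  assert (He : (e < d)%nat) by (apply H; apply in_or_app; simpl; auto).
  assert (Hw : (Nv d w < d ^ length w)%nat) by (apply IH; intros; apply H; apply in_or_app; auto).
  rewrite Nat.pow_add_r. simpl. rewrite Nat.mul_1_r.
  assert (Nv d w + 1 <= d ^ length w)%nat by lia.
  assert ((Nv d w + 1) * d <= d ^ length w * d)%nat by (apply Nat.mul_le_mono_r; auto). nia.
Qed.

Lemma Nv_app d u v : Nv d (u ++ v) = (Nv d u * d ^ length v + Nv d v)%nat.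
Proof.
  induction v as [|e v IH] using rev_ind.
  - rewrite app_nil_r. simpl. unfold Nv at 3. simpl. lia.
  - rewrite app_assoc, !Nv_snoc, IH, length_app. simpl length. rewrite Nat.pow_add_r. simpl. nia.
Qed.

Lemma prefx_add a k j : prefx a (k + j) = prefx a k ++ map a (seq k j).
Proof. unfold prefx. rewrite seq_app, map_app. reflexivity. Qed.

Lemma partial_sum d a k : (0 < d)%nat ->
  sum_f_R0 (dterm d a) k = INR (Nv d (prefx a (S k))) / INR d ^ (S k).
Proof.
  intros Hd. assert (0 < INR d) by (apply lt_0_INR; lia).
  induction k.
  - simpl. unfold dterm. unfold Nv. simpl. reflexivity.
  - simpl sum_f_R0. rewrite IHk. rewrite (prefx_S a (S k)), Nv_snoc. unfold dterm.
    rewrite plus_INR, mult_INR. simpl. field. split; [|lra]. apply pow_nonzero. lra.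
Qed.

Section Dig.
Variable d : nat.
Variable E : list nat.
Hypothesis hd : (2 <= d)%nat.
Hypothesis hE : forall e, In e E -> (e < d)%nat.

Definition Eseq (a : nat -> nat) := forall i, In (a i) E.

Lemma dpos : 0 < INR d.
Proof. apply lt_0_INR; lia. Qed.

Lemma pow_d_pos k : 0 < INR d ^ k.
Proof. apply pow_lt, dpos. Qed.

Lemma prefx_digits a k : Eseq a -> forall e, In e (prefx a k) -> (e < d)%nat.
Proof. intros Ha e He. unfold prefx in He. apply in_map_iff in He. destruct He as [i [<- _]]. apply hE, Ha. Qed.

Lemma cv_le_bound (u : nat -> R) l M n0 : Un_cv u l -> (forall n, (n >= n0)%nat -> u n <= M) -> l <= M.
Proof.
  intros Hu Hb. destruct (Rle_dec l M) as [|Hn]; auto. exfalso.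
  destruct (Hu (l - M)) as [N HN]; [lra|].
  specialize (HN (Nat.max N n0) ltac:(lia)). specialize (Hb (Nat.max N n0) ltac:(lia)).
  unfold R_dist in HN. apply Rabs_def2 in HN. lra.
Qed.

Lemma cv_ge_bound (u : nat -> R) l M n0 : Un_cv u l -> (forall n, (n >= n0)%nat -> M <= u n) -> M <= l.
Proof.
  intros Hu Hb. destruct (Rle_dec M l) as [|Hn]; auto. exfalso.
  destruct (Hu (M - l)) as [N HN]; [lra|].
  specialize (HN (Nat.max N n0) ltac:(lia)). specialize (Hb (Nat.max N n0) ltac:(lia)).
  unfold R_dist in HN. apply Rabs_def2 in HN. lra.
Qed.

Lemma key_interval a x k : Eseq a -> infinite_sum (dterm d a) x ->
  INR (Nv d (prefx a k)) / INR d ^ k <= x <= (INR (Nv d (prefx a k)) + 1) / INR d ^ k.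
Proof.
  intros Ha Hx. pose proof dpos as Hdp.
  assert (Hp : forall n, (n >= k)%nat ->
    INR (Nv d (prefx a k)) / INR d ^ k <= sum_f_R0 (dterm d a) n <= (INR (Nv d (prefx a k)) + 1) / INR d ^ k).
  { intros n Hn. rewrite partial_sum by lia.
    replace (S n) with (k + (S n - k))%nat by lia. rewrite prefx_add, Nv_app.
    set (j := (S n - k)%nat). set (T := Nv d (map a (seq k j))).
    assert (HT : (T < d ^ j)%nat).
    { unfold T. replace j with (length (map a (seq k j))) at 2 by (rewrite length_map, length_seq; reflexivity).
      apply Nv_lt. intros e He. apply in_map_iff in He. destruct He as [i [<- _]]. apply hE, Ha. }
    rewrite length_map, length_seq. fold j. fold T.
    rewrite plus_INR, mult_INR, pow_INR, pow_add.
    assert (HT' : INR T + 1 <= INR d ^ j) by (rewrite <- pow_INR, <- S_INR; apply le_INR; lia).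
    assert (0 <= INR T) by apply pos_INR.
    assert (0 < INR d ^ j) by (apply pow_d_pos).
    assert (0 < INR d ^ k) by (apply pow_d_pos).
    set (N := INR (Nv d (prefx a k))) in *. assert (0 <= N) by apply pos_INR.
    replace ((N * INR d ^ j + INR T) / (INR d ^ k * INR d ^ j)) with (N / INR d ^ k + (INR T / INR d ^ j) / INR d ^ k) by (field; lra).
    assert (0 <= INR T / INR d ^ j <= 1).
    { split. apply Rmult_le_pos; [lra|apply Rlt_le, Rinv_0_lt_compat; lra].
      apply (Rmult_le_reg_r (INR d ^ j)); auto. unfold Rdiv. rewrite Rmult_assoc, Rinv_l by lra. lra. }
    set (u := INR T / INR d ^ j) in *.
    replace ((N + 1) / INR d ^ k) with (N / INR d ^ k + 1 / INR d ^ k) by (field; lra).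
    assert (0 < / INR d ^ k) by (apply Rinv_0_lt_compat; lra). unfold Rdiv. nra. }
  split.
  - apply (cv_ge_bound _ _ _ k Hx). intros; apply Hp; auto.
  - apply (cv_le_bound _ _ _ k Hx). intros; apply Hp; auto.
Qed.

Lemma value_exists a : Eseq a -> exists x, infinite_sum (dterm d a) x.
Proof.
  intros Ha. apply Un_cv_crit.
  - intros n. simpl. unfold dterm. assert (0 < INR d ^ S (S n)) by apply pow_d_pos.
    assert (0 <= INR (a (S n))) by apply pos_INR. unfold Rdiv.
    assert (0 <= INR (a (S n)) * / INR d ^ S (S n)) by (apply Rmult_le_pos; [lra|apply Rlt_le, Rinv_0_lt_compat; lra]).
    lra.
  - exists 1. intros y [n ->]. rewrite partial_sum by lia.
    assert (H := Nv_lt d (prefx a (S n)) (prefx_digits a (S n) Ha)). rewrite prefx_length in H.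
    apply lt_INR in H. rewrite pow_INR in H. assert (0 < INR d ^ S n) by apply pow_d_pos.
    unfold Rdiv. apply (Rmult_le_reg_r (INR d ^ S n)); auto. rewrite Rmult_assoc, Rinv_l by lra. lra.
Qed.

Lemma ext_length v k : length (extw E v k) = (length E ^ k)%nat.
Proof.
  induction k; simpl; [reflexivity|].
  assert (G : forall l : list (list nat), length (flat_map (fun w => map (fun e => w ++ e :: nil) E) l) = (length l * length E)%nat).
  { induction l; simpl; [reflexivity|]. rewrite length_app, length_map, IHl. lia. }
  rewrite G, IHk. lia.
Qed.

Lemma prefx_in_ext a n k : Eseq a -> In (prefx a (n + k)) (extw E (prefx a n) k).
Proof.
  intros Ha. induction k.
  - rewrite Nat.add_0_r. simpl; auto.
  - simpl. rewrite Nat.add_succ_r, prefx_S. apply in_flat_map. exists (prefx a (n + k)). split; auto.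
    apply (in_map (fun e => prefx a (n + k) ++ e :: nil)). apply Ha.
Qed.

End Dig.
From Stdlib Require Import Reals Lra Lia List ClassicalEpsilon Classical.
Open Scope R_scope.

Lemma firstn_prefx a j K : (j <= K)%nat -> firstn j (prefx a K) = prefx a j.
Proof.
  intros H. replace K with (j + (K - j))%nat by lia. rewrite prefx_add.
  rewrite firstn_app, prefx_length, Nat.sub_diag. simpl. rewrite app_nil_r.
  rewrite <- (prefx_length a j) at 1. apply firstn_all.
Qed.

Definition ind (v w : list nat) : R :=
  if list_eq_dec Nat.eq_dec (firstn (length v) w) v then 1 else 0.

Lemma ind_01 v w : 0 <= ind v w <= 1.
Proof. unfold ind; destruct list_eq_dec; lra. Qed.

Lemma lsum_indic_0 (E : list nat) c : ~ In c E ->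
  lsum (fun e => if Nat.eq_dec e c then 1 else 0) E = 0.
Proof.
  induction E as [|a E IH]; intros Hn; simpl; [lra|].
  destruct (Nat.eq_dec a c); [subst; exfalso; apply Hn; simpl; auto|].
  rewrite IH; [lra|]. intro; apply Hn; simpl; auto.
Qed.

Lemma lsum_indic_le1 (E : list nat) c : NoDup E ->
  lsum (fun e => if Nat.eq_dec e c then 1 else 0) E <= 1.
Proof.
  induction E as [|a E IH]; intros Hn; simpl; [lra|].
  inversion Hn; subst. destruct (Nat.eq_dec a c).
  - subst. rewrite lsum_indic_0; auto. lra.
  - specialize (IH H2). lra.
Qed.

Lemma ind_snoc v w e : ind (v ++ e :: nil) w <= (if Nat.eq_dec e (nth (length v) w 0%nat) then 1 else 0) * ind v w.
Proof.
  unfold ind at 1. destruct list_eq_dec as [Heq|Hne]; [|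
    destruct Nat.eq_dec; pose proof (ind_01 v w); lra].
  rewrite length_app in Heq. simpl length in Heq.
  assert (H1 : firstn (length v) w = v).
  { assert (H := f_equal (firstn (length v)) Heq). rewrite firstn_firstn in H.
    rewrite Nat.min_l in H by lia. rewrite H. rewrite firstn_app, Nat.sub_diag. simpl.
    rewrite app_nil_r. apply firstn_all. }
  assert (H2 : nth (length v) w 0%nat = e).
  { assert (H := f_equal (fun l => nth (length v) l 0%nat) Heq). simpl in H.
    rewrite nth_firstn in H. replace (Nat.ltb (length v) (length v + 1)) with true in H
      by (symmetry; apply Nat.ltb_lt; lia).
    rewrite H. rewrite app_nth2 by lia. rewrite Nat.sub_diag. reflexivity. }
  destruct Nat.eq_dec; [|congruence]. unfold ind. destruct list_eq_dec; [lra|congruence].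
Qed.

Section Tree.
Variable E : list nat.
Hypothesis hnd : NoDup E.
Variable e0 : nat.
Hypothesis he0 : In e0 E.
Variable Lw : list (list nat).
Variable B : nat.
Hypothesis HB : forall w, In w Lw -> (length w <= B)%nat.
Variable p : R.
Hypothesis hp : p = INR (length E).
Hypothesis hp0 : 0 < p.

Definition wt (w : list nat) : R := (/p) ^ length w.

Lemma wt_pos w : 0 < wt w.
Proof. unfold wt. apply pow_lt. apply Rinv_0_lt_compat; lra. Qed.

Definition CovL (v : list nat) := forall a, (forall i, In (a i) E) -> prefx a (length v) = v ->
  exists w, In w Lw /\ prefx a (length w) = w.

Lemma extend_seq v : (forall e, In e v -> In e E) ->
  exists a, (forall i, In (a i) E) /\ prefx a (length v) = v.
Proof.
  intros Hv. exists (fun i => nth i v e0). split.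
  - intros i. destruct (Nat.lt_ge_cases i (length v)).
    + apply Hv, nth_In; auto.
    + rewrite nth_overflow; auto.
  - unfold prefx. apply nth_ext with (d := e0) (d' := e0).
    + rewrite length_map, length_seq; auto.
    + intros n Hn. rewrite length_map, length_seq in Hn.
      pose proof (map_nth (fun i => nth i v e0) (seq 0 (length v)) 0%nat n) as Hm. cbv beta in Hm.
      rewrite (nth_indep _ e0 (nth 0%nat v e0)) by (rewrite length_map, length_seq; auto).
      rewrite Hm, seq_nth; auto.
Qed.

Lemma tree_claim : forall m v, (B - length v <= m)%nat -> (forall e, In e v -> In e E) -> CovL v ->
  (exists w, In w Lw /\ firstn (length w) v = w) \/
  wt v <= lsum (fun w => ind v w * wt w) Lw.
Proof.
  induction m; intros v Hm Hv Hc.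
  - left. destruct (extend_seq v Hv) as [a [Ha Hav]].
    destruct (Hc a Ha Hav) as [w [Hw Haw]]. exists w; split; auto.
    rewrite <- Hav, firstn_prefx; auto. specialize (HB w Hw). lia.
  - destruct (classic (exists w, In w Lw /\ firstn (length w) v = w)) as [Hy|Hn]; [left; auto|right].
    assert (Hstep : forall e, In e E -> wt v * / p <= lsum (fun w => ind (v ++ e :: nil) w * wt w) Lw).
    { intros e He.
      assert (Hc' : CovL (v ++ e :: nil)).
      { intros a Ha Hav. apply Hc; auto. rewrite length_app in Hav. simpl in Hav.
        rewrite <- (firstn_prefx a (length v) (length v + 1)) by lia. rewrite Hav.
        rewrite firstn_app, Nat.sub_diag. simpl. rewrite app_nil_r. apply firstn_all. }
      assert (Hv' : forall x, In x (v ++ e :: nil) -> In x E).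
      { intros x Hx. apply in_app_or in Hx. destruct Hx as [Hx|[<-|[]]]; auto. }
      assert (Hwt : wt (v ++ e :: nil) = wt v * / p).
      { unfold wt. rewrite length_app. simpl length. rewrite pow_add. simpl. ring. }
      destruct (IHm (v ++ e :: nil) ltac:(rewrite length_app; simpl; lia) Hv' Hc') as [[w [Hw Hwv]]|Hle].
      + assert (Hlen : (length w > length v)%nat).
        { destruct (Nat.le_gt_cases (length w) (length v)); auto. exfalso. apply Hn. exists w. split; auto.
          rewrite firstn_app in Hwv. replace (length w - length v)%nat with 0%nat in Hwv by lia.
          simpl in Hwv. rewrite app_nil_r in Hwv. auto. }
        assert (Hweq : w = v ++ e :: nil).
        { rewrite firstn_all2 in Hwv; auto. rewrite length_app; simpl; lia. }
        subst w. rewrite <- Hwt.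
        assert (Hi : ind (v ++ e :: nil) (v ++ e :: nil) = 1).
        { unfold ind. rewrite firstn_all. destruct list_eq_dec; congruence. }
        eapply Rle_trans; [|apply (lsum_mem (fun w => ind (v ++ e :: nil) w * wt w) Lw (v ++ e :: nil)); auto].
        * rewrite Hi. lra.
        * intros y _. pose proof (ind_01 (v ++ e :: nil) y). pose proof (wt_pos y). nra.
      + rewrite <- Hwt. auto. }
    assert (H1 : wt v = lsum (fun e => wt v * / p) E).
    { rewrite lsum_const. rewrite <- hp. field. lra. }
    rewrite H1. eapply Rle_trans; [apply lsum_le; exact Hstep|].
    rewrite lsum_swap. apply lsum_le. intros w _.
    eapply Rle_trans.
    { apply lsum_le. intros e _. apply Rmult_le_compat_r; [apply Rlt_le, wt_pos|]. apply ind_snoc. }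
    rewrite (lsum_ext _ (fun e => (ind v w * wt w) * (if Nat.eq_dec e (nth (length v) w 0%nat) then 1 else 0)))
      by (intros; ring).
    rewrite lsum_scal. pose proof (lsum_indic_le1 E (nth (length v) w 0%nat) hnd).
    pose proof (ind_01 v w). pose proof (wt_pos w). 
    assert (0 <= ind v w * wt w) by nra. nra.
Qed.

Lemma tree_final : CovL nil -> 1 <= lsum wt Lw.
Proof.
  intros Hc. destruct (tree_claim B nil ltac:(simpl; lia) ltac:(simpl; tauto) Hc) as [[w [Hw Hwv]]|Hle].
  - rewrite firstn_nil in Hwv. subst w. replace 1 with (wt nil) by (unfold wt; simpl; auto).
    apply lsum_mem; auto. intros; apply Rlt_le, wt_pos.
  - replace 1 with (wt nil) by (unfold wt; simpl; auto). eapply Rle_trans; [exact Hle|].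
    right. apply lsum_ext. intros w _. unfold ind. simpl length. rewrite firstn_0. destruct (list_eq_dec Nat.eq_dec (@nil nat) nil); [ring|congruence].
Qed.

End Tree.
From Stdlib Require Import Reals Lra Lia List ClassicalEpsilon Classical.
Open Scope R_scope.

Lemma Rpower_inv_pow x k s : 0 < x -> Rpower (/ x ^ k) s = / (Rpower x s) ^ k.
Proof.
  intros Hx. rewrite <- (Rpower_pow k x) by auto. rewrite <- Rpower_Ropp.
  rewrite <- (Rpower_pow k (Rpower x s)) by (unfold Rpower; apply exp_pos).
  rewrite !Rpower_mult. rewrite <- Rpower_Ropp. f_equal. ring.
Qed.

Lemma level_exists d rho : (2 <= d)%nat -> 0 < rho <= 1 ->
  exists k, / INR d ^ (S k) < rho /\ rho <= / INR d ^ k.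
Proof.
  intros Hd Hr. assert (Hdp : 1 < INR d) by (apply (lt_INR 1); lia).
  assert (Hi1 : / INR d < 1) by (rewrite <- Rinv_1; apply Rinv_lt_contravar; lra).
  destruct (pow_lt_1_zero (/ INR d) ltac:(rewrite Rabs_pos_eq; [exact Hi1|apply Rlt_le, Rinv_0_lt_compat; lra]) rho ltac:(lra)) as [K HK].
  specialize (HK K (le_n K)). rewrite Rabs_pos_eq in HK by (apply pow_le, Rlt_le, Rinv_0_lt_compat; lra).
  rewrite pow_inv in HK. clear -HK Hr Hdp.
  induction K.
  - simpl in HK. rewrite Rinv_1 in HK. lra.
  - destruct (Rle_lt_dec rho (/ INR d ^ K)).
    + exists K; auto.
    + apply IHK; auto.
Qed.

Lemma finite_max (P : nat -> nat -> Prop) (l : list nat) :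
  (forall N N' e, P N e -> (N <= N')%nat -> P N' e) -> (forall e, In e l -> exists N, P N e) ->
  exists N, forall e, In e l -> P N e.
Proof.
  intros Hm. induction l as [|a l IH]; intros H.
  - exists 0%nat; simpl; tauto.
  - destruct (H a (or_introl eq_refl)) as [Na HNa].
    destruct IH as [Nl HNl]. { intros; apply H; simpl; auto. }
    exists (Nat.max Na Nl). intros e [<-|He].
    + apply (Hm Na); auto; lia.
    + apply (Hm Nl); auto; lia.
Qed.

Lemma maxlen_spec (L : list (list nat)) w : In w L -> (length w <= fold_right (fun w acc => Nat.max (length w) acc) 0%nat L)%nat.
Proof. induction L as [|a L IH]; simpl; [tauto|]. intros [<-|Hw]; [lia|]. specialize (IH Hw). lia. Qed.

Section Konig.
Variable d : nat.
Variable E : list nat.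
Hypothesis hd : (2 <= d)%nat.
Hypothesis hE : forall e, In e E -> (e < d)%nat.
Hypothesis hnd : NoDup E.
Hypothesis hp1 : (1 < length E)%nat.

Lemma dim_lower (s : R) : 0 < s -> Rpower (INR d) s <= INR (length E) -> ~ haus_le s (digitJ d E) 0.
Proof.
  intros Hs HDs H.
  set (p := INR (length E)) in *.
  assert (Hp0 : 1 < p) by (apply (lt_INR 1); auto).
  assert (Hdp : 1 < INR d) by (apply (lt_INR 1); lia).
  set (Ds := Rpower (INR d) s) in *.
  assert (HDs1 : 1 < Ds) by (unfold Ds; rewrite <- (Rpower_O (INR d)) by lra; apply Rpower_lt; lra).
  destruct (H 1 Rlt_0_1 (/ (10 * Ds)) ltac:(apply Rinv_0_lt_compat; lra)) as [U [rho [Hr [Hcov Hsum]]]].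
  clear H.
  set (kk := fun n => epsilon (inhabits 0%nat) (fun k => / INR d ^ (S k) < rho n /\ rho n <= / INR d ^ k)).
  assert (Hkk : forall n, / INR d ^ (S (kk n)) < rho n /\ rho n <= / INR d ^ (kk n)).
  { intros n. unfold kk. apply epsilon_spec. apply level_exists; auto. apply Hr. }
  set (Nst := fun n => epsilon (inhabits 0%nat) (fun N => exists a x, Eseq E a /\ infinite_sum (dterm d a) x /\ U n x /\ Nv d (prefx a (kk n)) = N)).
  set (M := fun n => map (decode d (kk n)) ((Nst n - 2) :: (Nst n - 1) :: Nst n :: (Nst n + 1) :: (Nst n + 2) :: nil)%nat).
  assert (Hmark : forall n a x, Eseq E a -> infinite_sum (dterm d a) x -> U n x -> In (prefx a (kk n)) (M n)).
  { intros n a x Ha Hx HU.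
    assert (Hex : exists N, exists a x, Eseq E a /\ infinite_sum (dterm d a) x /\ U n x /\ Nv d (prefx a (kk n)) = N).
    { exists (Nv d (prefx a (kk n))), a, x; auto. }
    pose proof (epsilon_spec (inhabits 0%nat) _ Hex) as Hs'. fold (Nst n) in Hs'.
    destruct Hs' as [a' [x' [Ha' [Hx' [HU' HN']]]]].
    set (k := kk n) in *.
    pose proof (key_interval d E hd hE a x k Ha Hx) as [I1 I2].
    pose proof (key_interval d E hd hE a' x' k Ha' Hx') as [I3 I4].
    rewrite HN' in I3, I4.
    destruct (Hr n) as [_ Hdiam]. specialize (Hdiam x x' HU HU').
    destruct (Hkk n) as [_ Hk2]. fold k in Hk2.
    apply Rabs_le_inv in Hdiam.
    set (q := / INR d ^ k) in *.
    assert (Hq : 0 < q) by (unfold q; apply Rinv_0_lt_compat, pow_lt; lra).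
    unfold Rdiv in I1, I2, I3, I4. fold q in I1, I2, I3, I4.
    set (N := Nv d (prefx a k)) in *. set (N' := Nst n) in *.
    assert (A1 : INR N <= INR N' + 2).
    { apply (Rmult_le_reg_r q); auto. nra. }
    assert (A2 : INR N' <= INR N + 2).
    { apply (Rmult_le_reg_r q); auto. nra. }
    replace 2 with (INR 2) in A1, A2 by (simpl; lra).
    rewrite <- plus_INR in A1, A2. apply INR_le in A1. apply INR_le in A2.
    assert (Hpre : prefx a k = decode d k N).
    { unfold N. rewrite <- (prefx_length a k) at 2. symmetry. apply decode_Nv; [lia|].
      apply (prefx_digits d E hE); auto. }
    rewrite Hpre. unfold M. fold k. fold N'. apply in_map. simpl. lia. }
  set (cov := fun N v => forall a, Eseq E a -> prefx a (length v) = v ->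
                 exists n, (n <= N)%nat /\ In (prefx a (kk n)) (M n)).
  assert (Hcov0 : exists N, cov N nil).
  { apply NNPP. intro Hno.
    assert (H0 : forall N, ~ cov N nil) by (intros N HN; apply Hno; eauto).
    assert (Hstep : forall v, (forall N, ~ cov N v) -> exists e, In e E /\ forall N, ~ cov N (v ++ e :: nil)).
    { intros v Hv. apply NNPP. intro Hne. apply (Hv (proj1_sig (constructive_indefinite_description _
        (finite_max (fun N e => cov N (v ++ e :: nil)) E ltac:(intros N N' e Hc HNN a Ha Hav;
          destruct (Hc a Ha Hav) as [n [Hn Hin]]; exists n; split; [lia|auto])
          ltac:(intros e He; apply NNPP; intro Hn'; apply Hne; exists e; split; auto;
                intros N HN; apply Hn'; exists N; auto))))).
      destruct constructive_indefinite_description as [N HN]. simpl.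
      intros a Ha Hav. specialize (HN (a (length v)) (Ha _) a Ha).
      apply HN. rewrite length_app. simpl. rewrite Nat.add_1_r, prefx_S, Hav. reflexivity. }
    set (sel := fun v => epsilon (inhabits 0%nat) (fun e => In e E /\ forall N, ~ cov N (v ++ e :: nil))).
    set (bw := fix bw i := match i with O => nil | S i' => bw i' ++ sel (bw i') :: nil end).
    assert (Hinv : forall i, forall N, ~ cov N (bw i)).
    { induction i; [exact H0|]. simpl. apply (proj2 (epsilon_spec (inhabits 0%nat) _ (Hstep _ IHi))). }
    set (aa := fun i => sel (bw i)).
    assert (Haa : Eseq E aa).
    { intros i. unfold aa. apply (proj1 (epsilon_spec (inhabits 0%nat) _ (Hstep _ (Hinv i)))). }
    assert (Hpa : forall i, prefx aa i = bw i).
    { induction i; [reflexivity|]. rewrite prefx_S, IHi. reflexivity. }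
    destruct (value_exists d E hd hE aa Haa) as [x Hx].
    destruct (Hcov x (ex_intro _ aa (conj Haa Hx))) as [n Hn].
    pose proof (Hmark n aa x Haa Hx Hn) as Hm.
    apply (Hinv (kk n) n). intros a' Ha' Hav. exists n. split; auto.
    rewrite <- Hpa in Hav. rewrite prefx_length in Hav. rewrite Hav. auto. }
  destruct Hcov0 as [N HN].
  set (Lw := concat (map M (seq 0 (S N)))).
  assert (HLw : forall w, In w Lw -> (length w <= fold_right (fun w acc => Nat.max (length w) acc) 0%nat Lw)%nat).
  { apply maxlen_spec. }
  destruct E as [|e0 E'] eqn:HE; [simpl in hp1; lia|].
  assert (Hc : CovL (e0 :: E') Lw nil).
  { intros a Ha _. destruct (HN a Ha eq_refl) as [n [Hn Hin]].
    exists (prefx a (kk n)). split.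
    - unfold Lw. apply in_concat. exists (M n). split; auto. apply in_map, in_seq. lia.
    - rewrite prefx_length. reflexivity. }
  pose proof (tree_final (e0 :: E') hnd e0 (or_introl eq_refl) Lw _ HLw p eq_refl ltac:(lra) Hc) as Ht.
  unfold Lw in Ht. rewrite sum_f_R0_concat in Ht.
  assert (Hb : forall n, lsum (wt p) (M n) <= 5 * Ds * Rpower (rho n) s).
  { intros n. unfold M. rewrite lsum_map. unfold wt. 
    rewrite (lsum_ext _ (fun _ => (/p) ^ kk n)) by (intros; rewrite decode_length; auto).
    rewrite lsum_const. simpl length. replace (INR 5) with 5 by (simpl; lra).
    rewrite Rmult_assoc. apply Rmult_le_compat_l; [lra|].
    destruct (Hr n) as [[Hr0 Hr1] _]. destruct (Hkk n) as [Hk1 _].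
    rewrite pow_inv.
    apply Rle_trans with (/ Ds ^ kk n).
    { apply Rinv_le_contravar; [apply pow_lt; lra|]. apply pow_incr. split; [lra|]. auto. }
    unfold Ds. rewrite <- Rpower_inv_pow by lra.
    rewrite Rpower_mult_distr by lra.
    apply Rle_Rpower_l; [lra|]. split; [apply Rinv_0_lt_compat, pow_lt; lra|].
    simpl in Hk1. rewrite Rinv_mult in Hk1. 
    assert (/ INR d ^ kk n = INR d * (/ INR d * / INR d ^ kk n)) by (field; split; [apply pow_nonzero|]; lra).
    nra. }
  assert (Hfin : sum_f_R0 (fun n => lsum (wt p) (M n)) N <= 5 * Ds * (0 + / (10 * Ds))).
  { eapply Rle_trans; [apply sum_f_R0_le; exact Hb|].
    assert (Hsc : forall k, sum_f_R0 (fun n => 5 * Ds * Rpower (rho n) s) k = 5 * Ds * sum_f_R0 (fun n => Rpower (rho n) s) k).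
    { induction k; simpl; [ring|rewrite IHk; ring]. }
    rewrite Hsc. apply Rmult_le_compat_l; [lra|]. apply Hsum. }
  assert (5 * Ds * (0 + / (10 * Ds)) = / 2) by (field; lra).
  lra.
Qed.

End Konig.
From Stdlib Require Import Reals Lra Lia List ClassicalEpsilon Classical.
Open Scope R_scope.

Lemma haus_from_list s A r : 0 < s ->
  (forall eta, 0 < eta -> forall eps, 0 < eps -> exists (l : list R) (ell : R),
     0 < ell <= eta /\ (forall x, A x -> exists c, In c l /\ c <= x <= c + ell) /\
     INR (length l) * Rpower ell s <= r + eps) -> haus_le s A r.
Proof.
  intros Hs H eta Heta eps Heps.
  destruct (H eta Heta (eps / 2) ltac:(lra)) as [l [ell [Hell [Hc Hsum]]]].
  set (len := length l) in *.
  set (tau := fun n => Rmin eta (Rpower (eps / 2 * (/2) ^ (S n)) (/ s))).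
  exists (fun n x => (n < len)%nat /\ nth n l 0 <= x <= nth n l 0 + ell).
  exists (fun n => if Nat.ltb n len then ell else tau n).
  split; [|split].
  - intros n. destruct (Nat.ltb n len) eqn:En.
    + split; [lra|]. intros x y [_ Hx] [_ Hy]. apply Rabs_le_intro. lra.
    + split.
      * split. { unfold tau. apply Rmin_glb_lt; auto. unfold Rpower. apply exp_pos. }
        unfold tau. apply Rmin_l.
      * intros x y [Hn _]. apply Nat.ltb_ge in En. lia.
  - intros x Hx. destruct (Hc x Hx) as [c [Hcl Hcx]].
    destruct (In_nth l c 0 Hcl) as [n [Hn Hnth]]. exists n. rewrite Hnth. auto.
  - intros k.
    assert (Hb : forall n, Rpower (if Nat.ltb n len then ell else tau n) s <=
                 (if Nat.ltb n len then Rpower ell s else 0) + eps / 2 * (/2) ^ (S n)).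
    { intros n. assert (0 < (/2) ^ (S n)) by (apply pow_lt; lra).
      destruct (Nat.ltb n len). { assert (0 < eps / 2 * (/2) ^ (S n)) by (apply Rmult_lt_0_compat; lra). lra. }
      assert (0 < tau n) by (unfold tau; apply Rmin_glb_lt; auto; unfold Rpower; apply exp_pos).
      eapply Rle_trans. apply Rle_Rpower_l. lra. split. auto. unfold tau. apply Rmin_r.
      rewrite Rpower_mult. rewrite Rinv_l by lra. rewrite Rpower_1 by nra. lra. }
    eapply Rle_trans; [apply sum_f_R0_le; exact Hb|].
    rewrite sum_f_R0_plus.
    assert (0 <= Rpower ell s) by (unfold Rpower; apply Rlt_le, exp_pos).
    pose proof (sum_if_lt (Rpower ell s) len k H0).
    pose proof (sum_geom_eps (eps / 2) k ltac:(lra)). lra.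
Qed.

Lemma leb_from_list A r :
  (forall eps, 0 < eps -> exists l : list (R * R),
     (forall iv, In iv l -> fst iv <= snd iv) /\
     (forall x, A x -> exists iv, In iv l /\ fst iv <= x <= snd iv) /\
     lsum (fun iv => snd iv - fst iv) l <= r + eps) -> leb_le A r.
Proof.
  intros H eps Heps. destruct (H eps Heps) as [l [Hle [Hc Hs]]].
  exists (fun n => fst (nth n l (0, 0))), (fun n => snd (nth n l (0, 0))).
  split; [|split].
  - intros n. destruct (Nat.lt_ge_cases n (length l)).
    + apply Hle, nth_In; auto.
    + rewrite nth_overflow by auto. simpl; lra.
  - intros x Hx. destruct (Hc x Hx) as [iv [Hiv Hx']].
    destruct (In_nth l iv (0,0) Hiv) as [n [Hn Hnth]]. exists n. rewrite Hnth. auto.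
  - intros k. eapply Rle_trans; [|exact Hs].
    apply (sum_nth_le (fun iv => snd iv - fst iv) (0,0) l k); [simpl; lra|].
    intros x Hx. specialize (Hle x Hx). lra.
Qed.

Definition rect := ((R -> Prop) * (R -> Prop) * R * R)%type.
Definition rA (r : rect) : R -> Prop := fst (fst (fst r)).
Definition rB (r : rect) : R -> Prop := snd (fst (fst r)).
Definition ra (r : rect) : R := snd (fst r).
Definition rb (r : rect) : R := snd r.
Definition rval (r : rect) : R := ra r * rb r.
Definition z0 : rect := (fun _ => False, fun _ => False, 0, 0).

Definition rvalid (m1 m2 : set_meas_le) (r : rect) :=
  0 <= ra r /\ 0 <= rb r /\ m1 (rA r) (ra r) /\ m2 (rB r) (rb r).

Fixpoint loc (F : nat -> list rect) (f k n : nat) : rect :=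
  match f with O => z0
  | S f' => if Nat.ltb n (length (F k)) then nth n (F k) z0 else loc F f' (S k) (n - length (F k)) end.

Lemma loc_concat (F : nat -> list rect) : (forall k, (1 <= length (F k))%nat) ->
  forall c k0 n f, (n < length (concat (map F (seq k0 c))))%nat -> (n < f)%nat ->
  loc F f k0 n = nth n (concat (map F (seq k0 c))) z0.
Proof.
  intros HF. induction c; intros k0 n f Hn Hf.
  - simpl in Hn. lia.
  - destruct f; [lia|]. simpl. destruct (Nat.ltb n (length (F k0))) eqn:E.
    + apply Nat.ltb_lt in E. rewrite app_nth1; auto.
    + apply Nat.ltb_ge in E. rewrite app_nth2 by auto. apply IHc.
      * simpl in Hn. rewrite length_app in Hn. lia.
      * specialize (HF k0). lia.
Qed.

Lemma loc_in (F : nat -> list rect) f k n : loc F f k n = z0 \/ exists k', In (loc F f k n) (F k').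
Proof.
  revert k n. induction f; intros k n; simpl; [auto|].
  destruct (Nat.ltb n (length (F k))) eqn:E; [|apply IHf].
  right. exists k. apply nth_In. apply Nat.ltb_lt; auto.
Qed.

Lemma concat_len_ge (F : nat -> list rect) : (forall k, (1 <= length (F k))%nat) ->
  forall c k0, (c <= length (concat (map F (seq k0 c))))%nat.
Proof. intros HF. induction c; intros k0; simpl; [lia|]. rewrite length_app. specialize (IHc (S k0)). specialize (HF k0). lia. Qed.

Lemma prod_null_lists m1 m2 N :
  m1 (fun _ => False) 0 -> m2 (fun _ => False) 0 ->
  (forall eps, 0 < eps -> exists F : nat -> list rect,
     (forall k r, In r (F k) -> rvalid m1 m2 r) /\
     (forall x y, N x y -> exists k r, In r (F k) /\ rA r x /\ rB r y) /\
     (forall k, sum_f_R0 (fun i => lsum rval (F i)) k <= eps)) ->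
  prod_null m1 m2 N.
Proof.
  intros H1 H2 H eps Heps. destruct (H eps Heps) as [F [Hv [Hc Hs]]].
  set (F' := fun k => F k ++ z0 :: nil).
  assert (HF' : forall k, (1 <= length (F' k))%nat) by (intros; unfold F'; rewrite length_app; simpl; lia).
  set (el := fun n => loc F' (S n) 0 n).
  assert (Hvz : rvalid m1 m2 z0) by (unfold rvalid, z0, ra, rb, rA, rB; simpl; repeat split; auto; lra).
  assert (Hv' : forall k r, In r (F' k) -> rvalid m1 m2 r).
  { intros k r Hr. unfold F' in Hr. apply in_app_or in Hr. destruct Hr as [Hr|[<-|[]]]; eauto. }
  exists (fun n => rA (el n)), (fun n => rB (el n)), (fun n => ra (el n)), (fun n => rb (el n)).
  split; [|split].
  - intros n. destruct (loc_in F' (S n) 0 n) as [He|[k' Hk]].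
    + unfold el; rewrite He; apply Hvz.
    + apply (Hv' k'); auto.
  - intros x y Hxy. destruct (Hc x y Hxy) as [k [r [Hr [Hx Hy]]]].
    assert (Hin : In r (concat (map F' (seq 0 (S k))))).
    { apply in_concat. exists (F' k). split; [apply in_map, in_seq; lia|]. unfold F'; apply in_or_app; auto. }
    destruct (In_nth _ r z0 Hin) as [n [Hn Hnth]].
    exists n. unfold el. rewrite (loc_concat F' HF' (S k) 0 n (S n)) by (auto; lia). rewrite Hnth. auto.
  - intros K. set (Lall := concat (map F' (seq 0 (S K)))).
    assert (Hlen := concat_len_ge F' HF' (S K) 0).
    rewrite (sum_eq _ (fun n => rval (nth n Lall z0))).
    2:{ intros i Hi. unfold el, rval. rewrite (loc_concat F' HF' (S K) 0 i (S i)) by lia. reflexivity. }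
    eapply Rle_trans. apply (sum_nth_le rval z0 Lall K).
    { unfold rval, z0, ra, rb; simpl; lra. }
    { intros r Hr. unfold Lall in Hr. apply in_concat in Hr. destruct Hr as [l [Hl Hr]].
      apply in_map_iff in Hl. destruct Hl as [k [<- _]]. destruct (Hv' k r Hr) as [? [? _]]. unfold rval. nra. }
    unfold Lall. rewrite sum_f_R0_concat. eapply Rle_trans; [|apply (Hs K)].
    right. apply sum_eq. intros i _. unfold F'. rewrite lsum_app. simpl. unfold rval, z0, ra, rb; simpl. ring.
Qed.

Definition comp_null (m1 m2 : set_meas_le) (S : R -> R -> Prop) :=
  forall e, 0 < e -> exists l : list rect, (forall r, In r l -> rvalid m1 m2 r) /\
    lsum rval l <= e /\ (forall x y, S x y -> exists r, In r l /\ rA r x /\ rB r y).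

Lemma prod_null_comps m1 m2 N (Nk : nat -> R -> R -> Prop) :
  m1 (fun _ => False) 0 -> m2 (fun _ => False) 0 ->
  (forall x y, N x y -> exists k, Nk k x y) -> (forall k, comp_null m1 m2 (Nk k)) ->
  prod_null m1 m2 N.
Proof.
  intros H1 H2 HN Hk. apply prod_null_lists; auto. intros eps Heps.
  assert (He : forall k, 0 < eps * (/2) ^ (S k)) by (intros; apply Rmult_lt_0_compat; auto; apply pow_lt; lra).
  set (F := fun k => proj1_sig (constructive_indefinite_description _ (Hk k _ (He k)))).
  assert (HF : forall k, (forall r, In r (F k) -> rvalid m1 m2 r) /\ lsum rval (F k) <= eps * (/2) ^ (S k) /\
     (forall x y, Nk k x y -> exists r, In r (F k) /\ rA r x /\ rB r y)).
  { intros k. unfold F. destruct constructive_indefinite_description; simpl; auto. }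
  exists F. split; [|split].
  - intros k r Hr. apply (proj1 (HF k)); auto.
  - intros x y Hxy. destruct (HN x y Hxy) as [k Hk']. destruct (proj2 (proj2 (HF k)) x y Hk') as [r Hr].
    exists k, r; auto.
  - intros k. eapply Rle_trans; [|apply (sum_geom_eps eps k); lra].
    apply sum_f_R0_le. intros n. apply (HF n).
Qed.
From Stdlib Require Import Reals Lra Lia List ClassicalEpsilon Classical.
Open Scope R_scope.

Lemma small_pow x c : 0 <= x < 1 -> 0 < c -> exists m, x ^ m < c.
Proof.
  intros Hx Hc. destruct (pow_lt_1_zero x ltac:(rewrite Rabs_pos_eq; lra) c Hc) as [m Hm].
  exists m. specialize (Hm m (le_n m)). rewrite Rabs_pos_eq in Hm; auto. apply pow_le; lra.
Qed.

Lemma geom q x x0 h t c ell : q <> 0 -> Rabs (x - x0) <= h -> c <= t <= c + ell ->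
  Rabs ((t - (1 - q) * x) / q - (c - (1 - q) * x0) / q) <= (ell + Rabs (1 - q) * h) / Rabs q.
Proof.
  intros Hq Hx Ht.
  replace ((t - (1 - q) * x) / q - (c - (1 - q) * x0) / q) with (((t - c) - (1 - q) * (x - x0)) * / q) by (field; auto).
  rewrite Rabs_mult, Rabs_inv. unfold Rdiv. apply Rmult_le_compat_r.
  { apply Rlt_le, Rinv_0_lt_compat, Rabs_pos_lt; auto. }
  eapply Rle_trans; [apply Rabs_triang|]. rewrite Rabs_Ropp, Rabs_mult.
  assert (Rabs (t - c) <= ell) by (apply Rabs_le_intro; lra).
  assert (Rabs (1 - q) * Rabs (x - x0) <= Rabs (1 - q) * h) by (apply Rmult_le_compat_l; auto; apply Rabs_pos).
  lra.
Qed.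

Lemma leb_balls l r : 0 <= r -> leb_le (fun y => exists c, In c l /\ Rabs (y - c) <= r) (INR (length l) * (2 * r)).
Proof.
  intros Hr. apply leb_from_list. intros eps Heps. exists (map (fun c => (c - r, c + r)) l). split; [|split].
  - intros iv Hiv. apply in_map_iff in Hiv. destruct Hiv as [c [<- _]]. simpl. lra.
  - intros y [c [Hc Hy]]. exists (c - r, c + r). split; [apply (in_map (fun c => (c - r, c + r))); auto|]. simpl. apply Rabs_le_inv in Hy. lra.
  - rewrite lsum_map. simpl. rewrite (lsum_ext _ (fun _ => 2 * r)) by (intros; ring). rewrite lsum_const. lra.
Qed.

Lemma leb_interval a b : a <= b -> leb_le (fun y => a <= y <= b) (b - a).
Proof.
  intros Hab. apply leb_from_list. intros eps Heps. exists ((a, b) :: nil). split; [|split].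
  - intros iv [<-|[]]; simpl; lra.
  - intros y Hy. exists (a, b); simpl; auto.
  - simpl. lra.
Qed.

Lemma leb_empty : leb_le (fun _ => False) 0.
Proof.
  apply leb_from_list. intros eps Heps. exists nil. simpl. split; [tauto|split; [tauto|lra]].
Qed.

Lemma haus_empty s A : 0 < s -> (forall x, ~ A x) -> haus_le s A 0.
Proof.
  intros Hs HA. apply haus_from_list; auto. intros eta Heta eps Heps. exists nil, eta.
  split; [lra|split]. - intros x Hx; exfalso; eapply HA; eauto. - simpl. lra.
Qed.

Section Meas.
Variable d : nat.
Variable E : list nat.
Hypothesis hd : (2 <= d)%nat.
Hypothesis hE : forall e, In e E -> (e < d)%nat.

Definition Acyl (n : nat) (v : list nat) (x : R) : Prop :=
  exists a, Eseq E a /\ infinite_sum (dterm d a) x /\ prefx a n = v.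

Definition cL (n : nat) (w : list nat) : R := INR (Nv d w) / INR d ^ n.

Lemma Acyl_interval n v x : Acyl n v x -> cL n v <= x <= cL n v + / INR d ^ n.
Proof.
  intros [a [Ha [Hx <-]]]. pose proof (key_interval d E hd hE a x n Ha Hx). unfold cL.
  assert (0 < INR d ^ n) by (apply pow_lt, (lt_INR 0); lia).
  replace ((INR (Nv d (prefx a n)) + 1) / INR d ^ n) with (INR (Nv d (prefx a n)) / INR d ^ n + / INR d ^ n) in H by (field; lra).
  auto.
Qed.

Lemma J_point x : digitJ d E x -> exists w, In w (extw E nil 0) /\ Acyl 0 w x.
Proof. intros [a [Ha Hx]]. exists nil. split; [simpl; auto|]. exists a; auto. Qed.

Lemma J_cyl m x : digitJ d E x -> exists w, In w (extw E nil m) /\ Acyl m w x.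
Proof.
  intros [a [Ha Hx]]. exists (prefx a m). split.
  - apply (prefx_in_ext E a 0 m Ha).
  - exists a; auto.
Qed.

Lemma pow_ratio m : INR (length E ^ m) * / INR d ^ m = (INR (length E) / INR d) ^ m.
Proof.
  rewrite pow_INR. unfold Rdiv. rewrite Rpow_mult_distr. rewrite pow_inv. reflexivity.
Qed.

Lemma leb_J m : leb_le (digitJ d E) (INR (length E ^ m) * / INR d ^ m).
Proof.
  apply leb_from_list. intros eps Heps.
  exists (map (fun w => (cL m w, cL m w + / INR d ^ m)) (extw E nil m)). split; [|split].
  - intros iv Hiv. apply in_map_iff in Hiv. destruct Hiv as [w [<- _]]. simpl.
    assert (0 < / INR d ^ m) by (apply Rinv_0_lt_compat, pow_lt, (lt_INR 0); lia). lra.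
  - intros x Hx. destruct (J_cyl m x Hx) as [w [Hw Hc]]. exists (cL m w, cL m w + / INR d ^ m).
    split; [apply (in_map (fun w => (cL m w, cL m w + / INR d ^ m))); auto|]. simpl. apply Acyl_interval; auto.
  - rewrite lsum_map. simpl. rewrite (lsum_ext _ (fun _ => / INR d ^ m)) by (intros; ring).
    rewrite lsum_const, (ext_length d E hd). lra.
Qed.

Lemma eventually_small_inv c : 0 < c -> exists K, / INR d ^ K < c.
Proof.
  intros Hc. assert (Hdp : 1 < INR d) by (apply (lt_INR 1); lia).
  destruct (small_pow (/ INR d) c) as [K HK]; auto.
  - split. apply Rlt_le, Rinv_0_lt_compat; lra. rewrite <- Rinv_1. apply Rinv_lt_contravar; lra.
  - exists K. rewrite <- pow_inv. auto.
Qed.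

Variable delta : R.
Hypothesis hdelta : 0 < delta.
Hypothesis hD : INR (length E) <= Rpower (INR d) delta.

Lemma haus_cyl n v : haus_le delta (fun x => Acyl n v x /\ digitJ d E x) (/ Rpower (INR d) delta ^ n).
Proof.
  assert (Hdp : 1 < INR d) by (apply (lt_INR 1); lia).
  set (D := Rpower (INR d) delta) in *.
  assert (HD0 : 0 < D) by (unfold D, Rpower; apply exp_pos).
  apply haus_from_list; auto. intros eta Heta eps Heps.
  destruct (eventually_small_inv eta Heta) as [K HK].
  exists (map (cL (n + K)) (extw E v K)), (/ INR d ^ (n + K)). split; [|split].
  - split; [apply Rinv_0_lt_compat, pow_lt; lra|]. eapply Rle_trans; [|apply Rlt_le, HK].
    apply Rinv_le_contravar; [apply pow_lt; lra|]. apply Rle_pow; [lra|lia].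
  - intros x [[a [Ha [Hx Hv]]] _]. exists (cL (n + K) (prefx a (n + K))). split.
    + apply in_map. rewrite <- Hv. apply prefx_in_ext; auto.
    + apply Acyl_interval. exists a; auto.
  - rewrite length_map, (ext_length d E hd). rewrite Rpower_inv_pow by lra. fold D.
    rewrite pow_INR, pow_add, Rinv_mult.
    assert (INR (length E) ^ K <= D ^ K) by (apply pow_incr; split; [apply pos_INR|auto]).
    assert (0 < D ^ K) by (apply pow_lt; auto). assert (0 < / D ^ n) by (apply Rinv_0_lt_compat, pow_lt; auto).
    assert (INR (length E) ^ K * / D ^ K <= 1).
    { apply (Rmult_le_reg_r (D ^ K)); auto. rewrite Rmult_assoc, Rinv_l by lra. lra. }
    assert (INR (length E) ^ K * (/ D ^ n * / D ^ K) = / D ^ n * (INR (length E) ^ K * / D ^ K)) by ring.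
    nra.
Qed.

End Meas.
From Stdlib Require Import Reals Lra Lia List ClassicalEpsilon Classical.
Open Scope R_scope.

Definition balls (l : list R) (r : R) : R -> Prop := fun y => exists c, In c l /\ Rabs (y - c) <= r.

Lemma leb_mono A B r r' : leb_le A r -> (forall x, B x -> A x) -> r <= r' -> leb_le B r'.
Proof.
  intros H HB Hr eps Heps. destruct (H eps Heps) as [c [e [H1 [H2 H3]]]].
  exists c, e. split; [auto|split]; [intros x Hx; apply H2, HB, Hx|intros k; specialize (H3 k); lra].
Qed.

Lemma haus_mono s A B r r' : haus_le s A r -> (forall x, B x -> A x) -> r <= r' -> haus_le s B r'.
Proof.
  intros H HB Hr eta Heta eps Heps. destruct (H eta Heta eps Heps) as [U [rho [H1 [H2 H3]]]].
  exists U, rho. split; [auto|split]; [intros x Hx; apply H2, HB, Hx|intros k; specialize (H3 k); lra].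
Qed.

Lemma nat_floor N t : 0 <= t <= INR N -> exists j, (j <= N)%nat /\ INR j <= t <= INR j + 1.
Proof.
  induction N; intros Ht.
  - exists 0%nat. simpl in *. split; [lia|lra].
  - destruct (Rle_dec t (INR N)).
    + destruct IHN as [j [Hj Ht']]; [lra|]. exists j; split; [lia|auto].
    + exists N. split; [lia|]. rewrite S_INR in Ht. lra.
Qed.

Lemma grid_cover (M : R) (L : nat) x : (1 <= L)%nat -> M <= x <= M + 1 ->
  exists j, In j (seq 0 (S L)) /\ Rabs (x - (M + INR j / INR L)) <= / INR L.
Proof.
  intros HL Hx. assert (HL0 : 0 < INR L) by (apply (lt_INR 0); lia).
  destruct (nat_floor L ((x - M) * INR L)) as [j [Hj Ht]].
  { split; [nra|]. nra. }
  exists j. split; [apply in_seq; lia|]. apply Rabs_le_intro.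
  assert (Hdiv : x - (M + INR j / INR L) = ((x - M) * INR L - INR j) / INR L) by (field; lra).
  rewrite Hdiv. unfold Rdiv. assert (0 < / INR L) by (apply Rinv_0_lt_compat; auto). split; nra.
Qed.

Lemma lsum_rval_le (l : list rect) c : (forall r, In r l -> rval r <= c) -> lsum rval l <= INR (length l) * c.
Proof. intros H. rewrite <- lsum_const. apply lsum_le; auto. Qed.

Section Comps.
Variable d : nat.
Variable E : list nat.
Hypothesis hd : (2 <= d)%nat.
Hypothesis hE : forall e, In e E -> (e < d)%nat.
Hypothesis hp1 : (1 < length E)%nat.
Hypothesis hpd : (length E < d)%nat.

Let J := digitJ d E.
Let p := INR (length E).
Let dd := INR d.

Lemma dd1 : 1 < dd.
Proof. unfold dd. apply (lt_INR 1); lia. Qed.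

Lemma ratio_small c : 0 < c -> exists m, INR (length E ^ m) * / dd ^ m < c.
Proof.
  intros Hc. destruct (small_pow (p / dd) c) as [m Hm]; auto.
  - pose proof dd1. split. { unfold p. apply Rmult_le_pos; [apply pos_INR|apply Rlt_le, Rinv_0_lt_compat; lra]. }
    apply (Rmult_lt_reg_r dd); [lra|]. unfold Rdiv. rewrite Rmult_assoc, Rinv_l by lra. rewrite Rmult_1_l, Rmult_1_r.
    unfold p, dd. apply lt_INR; auto.
  - exists m. unfold dd. rewrite (pow_ratio d E). auto.
Qed.

Lemma grid_L c : 0 < c -> exists L : nat, (1 <= L)%nat /\ / INR L < c.
Proof.
  intros Hc. destruct (eventually_small_inv d hd c Hc) as [K HK]. exists (d ^ K)%nat. split.
  - pose proof (Nat.pow_le_mono_l 1 d K ltac:(lia)). rewrite Nat.pow_1_l in H. lia.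
  - rewrite pow_INR. auto.
Qed.

Lemma comp_i_diag (M : R) : comp_null leb_le leb_le (fun x y => x = y /\ M <= x <= M + 1).
Proof.
  intros e He. destruct (grid_L (e / 8) ltac:(lra)) as [L [HL HLe]].
  assert (HL0 : 0 < INR L) by (apply (lt_INR 0); lia).
  set (xc := fun j => M + INR j / INR L).
  exists (map (fun j => (balls (xc j :: nil) (/ INR L), balls (xc j :: nil) (/ INR L), 2 * / INR L, 2 * / INR L)) (seq 0 (S L))).
  assert (Hi : 0 < / INR L) by (apply Rinv_0_lt_compat; auto).
  split; [|split].
  - intros r Hr. apply in_map_iff in Hr. destruct Hr as [j [<- _]]. unfold rvalid, rA, rB, ra, rb; simpl.
    split; [lra|split; [lra|]]. split; (eapply leb_mono; [apply (leb_balls (xc j :: nil) (/ INR L)); lra|auto|]); simpl length; rewrite Rmult_1_l; lra.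
  - rewrite lsum_map, lsum_ext with (g := fun _ => 4 * (/ INR L * / INR L)) by (intros; unfold rval, ra, rb; simpl; ring).
    rewrite lsum_const, length_seq, S_INR.
    assert ((INR L + 1) * (4 * (/ INR L * / INR L)) <= 8 * / INR L).
    { assert (INR L * / INR L = 1) by (field; lra). assert (1 <= INR L) by (apply (le_INR 1); lia).
      assert (/ INR L <= 1) by (rewrite <- Rinv_1; apply Rinv_le_contravar; lra).
      replace ((INR L + 1) * (4 * (/ INR L * / INR L))) with (4 * (INR L * / INR L) * / INR L + 4 * (/ INR L * / INR L)) by ring.
      assert (/ INR L * / INR L <= / INR L) by nra. nra. }
    lra.
  - intros x y [<- Hx]. destruct (grid_cover M L x HL Hx) as [j [Hj Hxj]].
    exists (balls (xc j :: nil) (/ INR L), balls (xc j :: nil) (/ INR L), 2 * / INR L, 2 * / INR L).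
    split; [apply (in_map (fun j => (balls (xc j :: nil) (/ INR L), balls (xc j :: nil) (/ INR L), 2 * / INR L, 2 * / INR L))); auto|].
    unfold rA, rB; simpl. split; exists (xc j); simpl; auto.
Qed.

Lemma comp_i_zero (M : R) : comp_null leb_le leb_le (fun x y => J x /\ M <= y <= M + 1).
Proof.
  intros e He. destruct (ratio_small e He) as [m Hm].
  assert (0 <= INR (length E ^ m) * / dd ^ m).
  { apply Rmult_le_pos; [apply pos_INR|]. apply Rlt_le, Rinv_0_lt_compat, pow_lt. pose proof dd1; lra. }
  exists ((J, (fun y => M <= y <= M + 1), INR (length E ^ m) * / dd ^ m, 1) :: nil). split; [|split].
  - intros r [<-|[]]. unfold rvalid, rA, rB, ra, rb; simpl. split; [lra|split; [lra|split]].
    + apply leb_J; auto.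
    + eapply leb_mono; [apply (leb_interval M (M + 1)); lra|auto|lra].
  - simpl. unfold rval, ra, rb; simpl. lra.
  - intros x y [Hx Hy]. eexists; split; [left; reflexivity|]. unfold rA, rB; simpl; auto.
Qed.

Lemma comp_i_q (M q : R) : comp_null leb_le leb_le
  (fun x y => q <> 0 /\ M <= x <= M + 1 /\ exists t, J t /\ t = (1 - q) * x + q * y).
Proof.
  intros e He. destruct (Req_dec q 0) as [Hq0|Hq].
  { exists nil. simpl. split; [tauto|split; [lra|]]. intros x y [H _]; tauto. }
  assert (Haq : 0 < Rabs q) by (apply Rabs_pos_lt; auto).
  destruct (ratio_small (e * Rabs q / 16) ltac:(apply Rmult_lt_0_compat; [nra|lra])) as [m Hm].
  set (Pm := INR (length E ^ m)).
  assert (HPm : 1 <= Pm).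
  { unfold Pm. apply (le_INR 1). pose proof (Nat.pow_le_mono_l 1 (length E) m ltac:(lia)) as Hpw.
    rewrite Nat.pow_1_l in Hpw. lia. }
  set (C := 16 * Pm * (Rabs (1 - q) + 1)).
  assert (HC : 0 < C) by (unfold C; pose proof (Rabs_pos (1 - q)); nra).
  destruct (grid_L (e * Rabs q / C) ltac:(apply Rmult_lt_0_compat; [nra|apply Rinv_0_lt_compat; auto])) as [L [HL HLe]].
  assert (HL0 : 0 < INR L) by (apply (lt_INR 0); lia).
  assert (Hi : 0 < / INR L) by (apply Rinv_0_lt_compat; auto).
  pose proof dd1 as Hdd.
  assert (Hdm : 0 < / dd ^ m) by (apply Rinv_0_lt_compat, pow_lt; lra).
  set (rho := (/ dd ^ m + Rabs (1 - q) * / INR L) / Rabs q).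
  assert (Hrho : 0 <= rho) by (unfold rho; apply Rmult_le_pos; [pose proof (Rabs_pos (1 - q)); nra|apply Rlt_le, Rinv_0_lt_compat; auto]).
  set (xc := fun j => M + INR j / INR L).
  set (Bj := fun j => balls (map (fun w => (cL d m w - (1 - q) * xc j) / q) (extw E nil m)) rho).
  set (mk := fun j => (balls (xc j :: nil) (/ INR L), Bj j, 2 * / INR L, Pm * (2 * rho))).
  exists (map mk (seq 0 (S L))). split; [|split].
  - intros r Hr. apply in_map_iff in Hr. destruct Hr as [j [<- _]]. unfold rvalid, rA, rB, ra, rb, mk; simpl.
    split; [lra|split; [unfold Pm; pose proof (pos_INR (length E ^ m)); nra|split]].
    + eapply leb_mono; [apply (leb_balls (xc j :: nil) (/ INR L)); lra|auto|]. simpl length; rewrite Rmult_1_l; lra.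
    + eapply leb_mono; [apply (leb_balls (map (fun w => (cL d m w - (1 - q) * xc j) / q) (extw E nil m)) rho Hrho)|unfold Bj; auto|]. rewrite length_map, (ext_length d E hd). unfold Pm. lra.
  - rewrite lsum_map, lsum_ext with (g := fun _ => 2 * / INR L * (Pm * (2 * rho))) by (intros; unfold rval, ra, rb, mk; simpl; ring).
    rewrite lsum_const, length_seq, S_INR.
    assert (H1 : (INR L + 1) * (2 * / INR L) <= 4).
    { assert (INR L * / INR L = 1) by (field; lra). assert (1 <= INR L) by (apply (le_INR 1); lia).
      assert (/ INR L <= 1) by (rewrite <- Rinv_1; apply Rinv_le_contravar; lra). nra. }
    assert (H2 : Pm * (2 * rho) * 4 <= e).
    { unfold rho. unfold Rdiv.
      assert (E1 : Pm * (2 * ((/ dd ^ m + Rabs (1 - q) * / INR L) * / Rabs q)) * 4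
                   = 8 * (Pm * / dd ^ m) * / Rabs q + 8 * Pm * Rabs (1 - q) * / INR L * / Rabs q) by ring.
      rewrite E1. fold Pm in Hm.
      assert (T1 : 8 * (Pm * / dd ^ m) * / Rabs q <= e / 2).
      { apply (Rmult_le_reg_r (Rabs q)); auto. rewrite Rmult_assoc, Rinv_l by lra. 
        assert (Pm * / dd ^ m <= e * Rabs q / 16) by lra. unfold Rdiv in *. nra. }
      assert (T2 : 8 * Pm * Rabs (1 - q) * / INR L * / Rabs q <= e / 2).
      { apply (Rmult_le_reg_r (Rabs q)); auto. rewrite Rmult_assoc, Rinv_l by lra.
        assert (HLe' : / INR L * C <= e * Rabs q).
        { apply (Rmult_le_reg_r (/ C)); [apply Rinv_0_lt_compat; auto|]. rewrite Rmult_assoc, Rinv_r by lra. lra. }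
        unfold C in HLe'. pose proof (Rabs_pos (1 - q)). nra. }
      lra. }
    assert (0 <= Pm * (2 * rho)) by nra. nra.
  - intros x y [_ [Hx [t [Ht Hty]]]].
    destruct (grid_cover M L x HL Hx) as [j [Hj Hxj]].
    exists (mk j). split; [apply in_map; auto|]. unfold mk, rA, rB; simpl. split.
    + exists (xc j); simpl; auto.
    + destruct (J_cyl d E m t Ht) as [w [Hw Hcw]].
      pose proof (Acyl_interval d E hd hE m w t Hcw) as Hti.
      exists ((cL d m w - (1 - q) * xc j) / q). split.
      * apply (in_map (fun w => (cL d m w - (1 - q) * xc j) / q)); auto.
      * replace y with ((t - (1 - q) * x) / q) by (rewrite Hty; field; auto).
        apply geom; auto.
Qed.
End Comps.
From Stdlib Require Import Reals Lra Lia List ClassicalEpsilon Classical.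
Open Scope R_scope.

Section Comps2.
Variable d : nat.
Variable E : list nat.
Hypothesis hd : (2 <= d)%nat.
Hypothesis hE : forall e, In e E -> (e < d)%nat.
Hypothesis hp1 : (1 < length E)%nat.
Hypothesis hpd : (length E < d)%nat.
Variable delta : R.
Hypothesis hdelta : 0 < delta.
Hypothesis hD : INR (length E) <= Rpower (INR d) delta.

Let J := digitJ d E.
Let m1 := haus_restr delta J.
Let dd := INR d.

Lemma m1_empty : m1 (fun _ => False) 0.
Proof. apply haus_empty; auto. intros x [[] _]. Qed.

Lemma comp_ii_notJ (M : R) : comp_null m1 leb_le (fun x y => ~ J x /\ M <= y <= M + 1).
Proof.
  intros e He. exists (((fun x => ~ J x), (fun y => M <= y <= M + 1), 0, 1) :: nil). split; [|split].
  - intros r [<-|[]]. unfold rvalid, rA, rB, ra, rb; simpl. split; [lra|split; [lra|split]].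
    + apply haus_empty; auto. intros x [H1 H2]; auto.
    + eapply leb_mono; [apply (leb_interval M (M + 1)); lra|auto|lra].
  - simpl. unfold rval, ra, rb; simpl. lra.
  - intros x y [Hx Hy]. eexists; split; [left; reflexivity|]. unfold rA, rB; simpl; auto.
Qed.

Lemma comp_ii_diag : comp_null m1 leb_le (fun x y => J x /\ x = y).
Proof.
  intros e He. destruct (ratio_small d E hd hp1 hpd e He) as [m Hm].
  assert (0 <= INR (length E ^ m) * / INR d ^ m).
  { apply Rmult_le_pos; [apply pos_INR|]. apply Rlt_le, Rinv_0_lt_compat, pow_lt. apply (lt_INR 0); lia. }
  exists ((Acyl d E 0 nil, J, 1, INR (length E ^ m) * / INR d ^ m) :: nil). split; [|split].
  - intros r [<-|[]]. unfold rvalid, rA, rB, ra, rb; simpl. split; [lra|split; [lra|split]].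
    + eapply haus_mono; [apply (haus_cyl d E hd hE delta hdelta hD 0 nil)|auto|simpl; rewrite Rinv_1; lra].
    + apply leb_J; auto.
  - simpl. unfold rval, ra, rb; simpl. unfold dd in Hm. lra.
  - intros x y [Hx <-]. eexists; split; [left; reflexivity|]. unfold rA, rB; simpl. split; auto.
    destruct Hx as [a [Ha Hx]]. exists a. auto.
Qed.

Lemma comp_ii_q (q : R) : comp_null m1 leb_le
  (fun x y => q <> 0 /\ J x /\ exists t, J t /\ t = (1 - q) * x + q * y).
Proof.
  intros e He. destruct (Req_dec q 0) as [Hq0|Hq].
  { exists nil. simpl. split; [tauto|split; [lra|]]. intros x y [H _]; tauto. }
  assert (Haq : 0 < Rabs q) by (apply Rabs_pos_lt; auto).
  destruct (ratio_small d E hd hp1 hpd (e * Rabs q / 4) ltac:(apply Rmult_lt_0_compat; [nra|lra])) as [m Hm].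
  set (Pm := INR (length E ^ m)).
  assert (HPm : 1 <= Pm).
  { unfold Pm. apply (le_INR 1). pose proof (Nat.pow_le_mono_l 1 (length E) m ltac:(lia)) as Hpw.
    rewrite Nat.pow_1_l in Hpw. lia. }
  set (C := 4 * Pm * (Rabs (1 - q) + 1)).
  assert (HC : 0 < C) by (unfold C; pose proof (Rabs_pos (1 - q)); nra).
  destruct (eventually_small_inv d hd (e * Rabs q / C) ltac:(apply Rmult_lt_0_compat; [nra|apply Rinv_0_lt_compat; auto])) as [n Hn].
  assert (Hdd : 1 < dd) by (unfold dd; apply (lt_INR 1); lia).
  assert (Hdm : 0 < / dd ^ m) by (apply Rinv_0_lt_compat, pow_lt; lra).
  assert (Hdn : 0 < / dd ^ n) by (apply Rinv_0_lt_compat, pow_lt; lra).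
  set (D := Rpower (INR d) delta) in *.
  assert (HD0 : 0 < D) by (unfold D, Rpower; apply exp_pos).
  set (rho := (/ dd ^ m + Rabs (1 - q) * / dd ^ n) / Rabs q).
  assert (Hrho : 0 <= rho) by (unfold rho; apply Rmult_le_pos; [pose proof (Rabs_pos (1 - q)); nra|apply Rlt_le, Rinv_0_lt_compat; auto]).
  set (Bv := fun v => balls (map (fun w => (cL d m w - (1 - q) * cL d n v) / q) (extw E nil m)) rho).
  set (mk := fun v => (Acyl d E n v, Bv v, / D ^ n, Pm * (2 * rho))).
  exists (map mk (extw E nil n)). split; [|split].
  - intros r Hr. apply in_map_iff in Hr. destruct Hr as [v [<- _]]. unfold rvalid, rA, rB, ra, rb, mk; simpl.
    split; [apply Rlt_le, Rinv_0_lt_compat, pow_lt; auto|split; [nra|split]].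
    + apply (haus_cyl d E hd hE delta hdelta hD n v).
    + eapply leb_mono; [apply (leb_balls (map (fun w => (cL d m w - (1 - q) * cL d n v) / q) (extw E nil m)) rho Hrho)|unfold Bv; auto|].
      rewrite length_map, (ext_length d E hd). unfold Pm. lra.
  - rewrite lsum_map, lsum_ext with (g := fun _ => / D ^ n * (Pm * (2 * rho))) by (intros; unfold rval, ra, rb, mk; simpl; ring).
    rewrite lsum_const, (ext_length d E hd), pow_INR.
    assert (H1 : INR (length E) ^ n * / D ^ n <= 1).
    { assert (INR (length E) ^ n <= D ^ n) by (apply pow_incr; split; [apply pos_INR|auto]).
      assert (0 < D ^ n) by (apply pow_lt; auto).
      apply (Rmult_le_reg_r (D ^ n)); auto. rewrite Rmult_assoc, Rinv_l by lra. lra. }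
    assert (H2 : Pm * (2 * rho) <= e).
    { unfold rho. unfold Rdiv.
      assert (E1 : Pm * (2 * ((/ dd ^ m + Rabs (1 - q) * / dd ^ n) * / Rabs q))
                   = 2 * (Pm * / dd ^ m) * / Rabs q + 2 * Pm * Rabs (1 - q) * / dd ^ n * / Rabs q) by ring.
      rewrite E1. fold Pm in Hm. unfold dd in *.
      assert (T1 : 2 * (Pm * / INR d ^ m) * / Rabs q <= e / 2).
      { apply (Rmult_le_reg_r (Rabs q)); auto. rewrite Rmult_assoc, Rinv_l by lra.
        assert (Pm * / INR d ^ m <= e * Rabs q / 4) by lra. unfold Rdiv in *. nra. }
      assert (T2 : 2 * Pm * Rabs (1 - q) * / INR d ^ n * / Rabs q <= e / 2).
      { apply (Rmult_le_reg_r (Rabs q)); auto. rewrite Rmult_assoc, Rinv_l by lra.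
        assert (HLe' : / INR d ^ n * C <= e * Rabs q).
        { apply (Rmult_le_reg_r (/ C)); [apply Rinv_0_lt_compat; auto|]. rewrite Rmult_assoc, Rinv_r by lra. lra. }
        unfold C in HLe'. pose proof (Rabs_pos (1 - q)). nra. }
      lra. }
    assert (0 <= Pm * (2 * rho)) by nra.
    replace (INR (length E) ^ n * (/ D ^ n * (Pm * (2 * rho)))) with ((INR (length E) ^ n * / D ^ n) * (Pm * (2 * rho))) by ring.
    assert (0 <= INR (length E) ^ n * / D ^ n).
    { apply Rmult_le_pos; [apply pow_le, pos_INR|apply Rlt_le, Rinv_0_lt_compat, pow_lt; auto]. }
    nra.
  - intros x y [_ [Hx [t [Ht Hty]]]].
    destruct (J_cyl d E n x Hx) as [v [Hv Hcv]].
    pose proof (Acyl_interval d E hd hE n v x Hcv) as Hxi.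
    exists (mk v). split; [apply in_map; auto|]. unfold mk, rA, rB; simpl. split; auto.
    destruct (J_cyl d E m t Ht) as [w [Hw Hcw]].
    pose proof (Acyl_interval d E hd hE m w t Hcw) as Hti.
    exists ((cL d m w - (1 - q) * cL d n v) / q). split.
    + apply (in_map (fun w => (cL d m w - (1 - q) * cL d n v) / q)); auto.
    + replace y with ((t - (1 - q) * x) / q) by (rewrite Hty; field; auto).
      apply geom; auto. apply Rabs_le_intro. unfold dd. lra.
Qed.
End Comps2.

Lemma dim_ge d E delta : (2 <= d)%nat -> (forall e, In e E -> (e < d)%nat) -> NoDup E -> (1 < length E)%nat ->
  hausdorff_dim (digitJ d E) delta -> INR (length E) <= Rpower (INR d) delta.
Proof.
  intros hd hE hnd hp1 [H0 [H1 _]].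
  assert (Hdp : 1 < INR d) by (apply (lt_INR 1); lia).
  assert (Hp : 1 < INR (length E)) by (apply (lt_INR 1); lia).
  set (s0 := ln (INR (length E)) / ln (INR d)).
  assert (Hld : 0 < ln (INR d)) by (rewrite <- ln_1; apply ln_increasing; lra).
  assert (Hlp : 0 < ln (INR (length E))) by (rewrite <- ln_1; apply ln_increasing; lra).
  assert (Hs0 : Rpower (INR d) s0 = INR (length E)).
  { unfold Rpower, s0. replace (ln (INR (length E)) / ln (INR d) * ln (INR d)) with (ln (INR (length E))) by (field; lra).
    apply exp_ln; lra. }
  assert (Hs0p : 0 < s0) by (unfold s0; apply Rmult_lt_0_compat; auto; apply Rinv_0_lt_compat; auto).
  destruct (Rlt_le_dec delta s0) as [Hlt|Hge].
  - exfalso. set (s := (delta + s0) / 2).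
    apply (dim_lower d E hd hE hnd hp1 s).
    + unfold s; lra.
    + rewrite <- Hs0. apply Rlt_le, Rpower_lt; auto. unfold s; lra.
    + apply H1. unfold s; lra.
  - rewrite <- Hs0. apply Rle_Rpower; lra.
Qed.
From Stdlib Require Import Reals Lra Lia List ClassicalEpsilon Classical ZArith Cantor.
Open Scope R_scope.

Definition gZ (n : nat) : Z := let (i, j) := Cantor.of_nat n in (Z.of_nat i - Z.of_nat j)%Z.

Lemma gZ_surj z : exists n, gZ n = z.
Proof.
  exists (Cantor.to_nat (Z.to_nat z, Z.to_nat (- z))). unfold gZ. rewrite Cantor.cancel_of_to. lia.
Qed.

Definition decomp (k : nat) : nat * Z * Z * Z :=
  let (a, b) := Cantor.of_nat k in let (c, e) := Cantor.of_nat b in let (f, g) := Cantor.of_nat e in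
  (a, gZ c, gZ f, gZ g).

Lemma decomp_surj a M z1 z2 : exists k, decomp k = (a, M, z1, z2).
Proof.
  destruct (gZ_surj M) as [c Hc]. destruct (gZ_surj z1) as [f Hf]. destruct (gZ_surj z2) as [g Hg].
  exists (Cantor.to_nat (a, Cantor.to_nat (c, Cantor.to_nat (f, g)))). unfold decomp.
  rewrite !Cantor.cancel_of_to. rewrite Hc, Hf, Hg. reflexivity.
Qed.

Definition Nk1 (d : nat) (E : list nat) (k : nat) : R -> R -> Prop :=
  let '(kind, M, z1, z2) := decomp k in
  let q := IZR z1 / IZR z2 in
  match kind with
  | O => fun x y => x = y /\ IZR M <= x <= IZR M + 1
  | S O => fun x y => digitJ d E x /\ IZR M <= y <= IZR M + 1
  | _ => fun x y => q <> 0 /\ IZR M <= x <= IZR M + 1 /\ exists t, digitJ d E t /\ t = (1 - q) * x + q * y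
  end.

Definition Nk2 (d : nat) (E : list nat) (k : nat) : R -> R -> Prop :=
  let '(kind, M, z1, z2) := decomp k in
  let q := IZR z1 / IZR z2 in
  match kind with
  | O => fun x y => ~ digitJ d E x /\ IZR M <= y <= IZR M + 1
  | S O => fun x y => digitJ d E x /\ x = y
  | _ => fun x y => q <> 0 /\ digitJ d E x /\ exists t, digitJ d E t /\ t = (1 - q) * x + q * y
  end.

Lemma int_part_bounds x : IZR (Int_part x) <= x <= IZR (Int_part x) + 1.
Proof. pose proof (base_Int_part x). lra. Qed.

Lemma faff_eq x y t r : x <> y -> faff x y t = r -> t = (1 - r) * x + r * y.
Proof.
  intros Hxy H. unfold faff in H. assert (y - x <> 0) by lra.
  rewrite <- H. field. auto.
Qed.

Theorem mainTheorem3 (d : nat) (E : list nat) (delta : R) :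
  (2 <= d)%nat ->
  NoDup E -> (forall e, In e E -> (e < d)%nat) ->
  (1 < length E)%nat -> (length E < d)%nat ->
  hausdorff_dim (digitJ d E) delta ->
  (* (i) lambda x lambda - a.e. (x,y): f_{x,y}(J) ∩ Q = ∅ *)
  prod_null leb_le leb_le
    (fun x y => ~ (x <> y /\
        forall t (q : Q), digitJ d E t -> faff x y t <> Q2R q)) /\
  (* (ii) mu x lambda - a.e. (x,y): f_{x,y}(J) ∩ Q = {0} *)
  prod_null (haus_restr delta (digitJ d E)) leb_le
    (fun x y => ~ (x <> y /\
        forall r, ((exists t, digitJ d E t /\ faff x y t = r) /\
                   (exists q : Q, r = Q2R q)) <-> r = 0)).
Proof.
  intros hd hnd hE hp1 hpd hdim.
  pose proof (dim_ge d E delta hd hE hnd hp1 hdim) as hD.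
  assert (hdelta : 0 < delta).
  { destruct hdim as [H0 _]. destruct (Req_dec delta 0) as [Hz|Hz]; [|lra].
    exfalso. rewrite Hz in hD. unfold Rpower in hD. rewrite Rmult_0_l, exp_0 in hD.
    assert (1 < INR (length E)) by (apply (lt_INR 1); lia). lra. }
  split.
  - apply (prod_null_comps _ _ _ (Nk1 d E)); [apply leb_empty|apply leb_empty| |].
    + intros x y Hxy. destruct (Req_dec x y) as [Heq|Hne].
      * destruct (decomp_surj 0 (Int_part x) 0 0) as [k Hk]. exists k. unfold Nk1. rewrite Hk.
        split; auto. apply int_part_bounds.
      * assert (Hex : exists t q, digitJ d E t /\ faff x y t = Q2R q).
        { apply NNPP. intro Hn. apply Hxy. split; auto. intros t q Ht Hf. apply Hn. exists t, q; auto. }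
        destruct Hex as [t [q [Ht Hf]]].
        pose proof (faff_eq x y t _ Hne Hf) as Ht'.
        destruct (Req_dec (Q2R q) 0) as [Hq0|Hq0].
        -- destruct (decomp_surj 1 (Int_part y) 0 0) as [k Hk]. exists k. unfold Nk1. rewrite Hk.
           split; [|apply int_part_bounds]. rewrite Hq0 in Ht'. replace x with t by lra. auto.
        -- destruct (decomp_surj 2 (Int_part x) (Qnum q) (Zpos (Qden q))) as [k Hk]. exists k. unfold Nk1. rewrite Hk.
           change (IZR (Qnum q) / IZR (Z.pos (Qden q))) with (Q2R q).
           split; auto. split; [apply int_part_bounds|]. exists t; auto.
    + intros k. unfold Nk1. destruct (decomp k) as [[[kind M] z1] z2].
      destruct kind as [|[|kind]].
      * apply (comp_i_diag d E hd hp1 hpd).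
      * apply (comp_i_zero d E hd hE hp1 hpd).
      * apply (comp_i_q d E hd hE hp1 hpd).
  - apply (prod_null_comps _ _ _ (Nk2 d E)); [apply (m1_empty d E delta hdelta)|apply leb_empty| |].
    + intros x y Hxy. destruct (classic (digitJ d E x)) as [HJ|HJ].
      2:{ destruct (decomp_surj 0 (Int_part y) 0 0) as [k Hk]. exists k. unfold Nk2. rewrite Hk.
          split; auto. apply int_part_bounds. }
      destruct (Req_dec x y) as [Heq|Hne].
      * destruct (decomp_surj 1 0 0 0) as [k Hk]. exists k. unfold Nk2. rewrite Hk. auto.
      * assert (Hex : exists t q, digitJ d E t /\ faff x y t = Q2R q /\ Q2R q <> 0).
        { apply NNPP. intro Hn. apply Hxy. split; auto. intros r. split.
          - intros [[t [Ht Hf]] [q Hq]]. subst r. apply NNPP. intro Hq0. apply Hn. exists t, q. repeat split; auto. rewrite <- Hq; auto.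
          - intros ->. split.
            + exists x. split; auto. unfold faff. unfold Rdiv. rewrite Rminus_diag. ring.
            + exists 0%Q. unfold Q2R. simpl. ring. }
        destruct Hex as [t [q [Ht [Hf Hq0]]]].
        pose proof (faff_eq x y t _ Hne Hf) as Ht'.
        destruct (decomp_surj 2 0 (Qnum q) (Zpos (Qden q))) as [k Hk]. exists k. unfold Nk2. rewrite Hk.
        change (IZR (Qnum q) / IZR (Z.pos (Qden q))) with (Q2R q).
        split; auto. split; auto. exists t; auto.
    + intros k. unfold Nk2. destruct (decomp k) as [[[kind M] z1] z2].
      destruct kind as [|[|kind]].
      * apply (comp_ii_notJ d E delta hdelta).
      * apply (comp_ii_diag d E hd hE hp1 hpd delta hdelta hD).
      * apply (comp_ii_q d E hd hE hp1 hpd delta hdelta hD).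
Qed.
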